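(* Let $n\geq 3$. Let $H$ be the $n!\times(n-1)^2$ $0/1$ matrix with rows indexed by $S(n)$, columns indexed by ordered pairs $(i,j)$ with $i,j\in\{1,\dots,n-1\}$, and $(\pi,(i,j))$-entry equal to $1$ iff $\pi(i)=j$. Let $N$ be the submatrix of $H$ formed by the rows indexed by derangements of $\{1,\dots,n\}$, and let $[N|\mathbf 1]$ be $N$ with an extra all-ones column appended. If $y$ (indexed by the columns of $H$ together with one extra coordinate for the appended column) satisfies $[N|\mathbf 1]y=0$, then there is a scalar $c$ such that $y_{(i,j)}=c$ for all $i\neq j$ in $\{1,\dots,n-1\}$ and the extra coordinate of $y$ equals $-(n-2)c$; i.e. the restriction of $y$ to the coordinates $(i,j)$ with $i\neq j$ together with the extra coordinate is a scalar multiple of $(1,1,\dots,1,-(n-2))$.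
   Context: A derangement of $\{1,\dots,n\}$ is a permutation with no fixed points; $S(n)$ is the symmetric group on $\{1,\dots,n\}$. *)

(* Defs.v *)
From HB Require Import structures.
From mathcomp Require Import all_boot all_order all_algebra all_fingroup.
Set Implicit Arguments. Unset Strict Implicit. Unset Printing Implicit Defensive.
Import Order.TTheory GRing.Theory Num.Theory.
Local Open Scope ring_scope.

(* {1,...,n} is modelled by 'I_n = {0,...,n-1}; the subset {1,...,n-1}
   (all points but the last one, n) is modelled by 'I_n.-1 embedded in 'I_n. *)
Definition emb (n : nat) (i : 'I_n.-1) : 'I_n := widen_ord (leq_pred n) i.

Definition derangement (n : nat) (s : 'S_n) : bool := [forall i, s i != i].

Definition Hentry (R : nzRingType) (n : nat) (s : 'S_n) (i j : 'I_n.-1) : R :=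
  (s (emb i) == emb j)%:R.

(* Main.v *)
Require Import Defs.
From HB Require Import structures.
From mathcomp Require Import all_boot all_order all_algebra all_fingroup.
Import Order.TTheory GRing.Theory Num.Theory.
Local Open Scope ring_scope.
Set Implicit Arguments. Unset Strict Implicit. Unset Printing Implicit Defensive.

Lemma cyc_exists m (a : seq 'I_m.+1) : uniq a -> (1 < size a)%N ->
  exists s : 'S_m.+1, derangement s /\
    forall x, s x = next (a ++ [seq x <- enum 'I_m.+1 | x \notin a]) x.
Proof.
move=> ua sa; set c := _ ++ _.
have uc : uniq c.
  rewrite cat_uniq ua filter_uniq ?enum_uniq // andbT.
  by apply/hasPn => x; rewrite mem_filter => /andP[].
have inj : injective (next c) := can_inj (prev_next uc).
exists (perm inj); split; last by move=> x; rewrite permE.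
apply/forallP => x; rewrite permE.
have xc : x \in c.
  by rewrite mem_cat mem_filter mem_enum andbT; case: (x \in a).
have sc : (1 < size c)%N by rewrite size_cat (leq_trans sa) ?leq_addr.
rewrite next_nth xc; clear inj; move: uc xc sc; case: c => [|y p'] // uc xc sc.
set k := index x (y :: p').
have kl : (k < size (y :: p'))%N by rewrite index_mem.
have xk : nth y (y :: p') k = x by rewrite nth_index.
case: (ltnP k (size p')) => hk.
  rewrite -[X in _ != X]xk; change (nth y (y::p') k.+1 != nth y (y::p') k).
  by rewrite nth_uniq //= (gtn_eqF (ltnSn k)).
have ek : k = size p' by apply/eqP; rewrite eqn_leq hk andbT -ltnS.
rewrite nth_default ?ek //.
rewrite -[X in _ != X]xk ek; change (nth y (y::p') 0 != nth y (y::p') (size p')).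
by rewrite nth_uniq //= eq_sym -lt0n -ltnS.
Qed.

Definition rowS (R : nzRingType) m (s : 'S_m.+1) (y : 'I_m -> 'I_m -> R)
  (i : 'I_m) : R := \sum_(j : 'I_m) Hentry R s i j * y i j.

Lemma emb_inj m : injective (@emb m.+1).
Proof. by move=> a b /(congr1 val) /= /val_inj. Qed.

Lemma embL m (i : 'I_m) : (@emb m.+1 i != ord_max).
Proof. by rewrite -val_eqE /= neq_ltn ltn_ord. Qed.

Lemma rowE (R : nzRingType) m (s : 'S_m.+1) y i j :
  s (emb i) = emb j -> rowS s y i = y i j :> R.
Proof.
move=> h; rewrite /rowS (bigD1 j) //= big1 ?addr0.
  by rewrite /Hentry h eqxx mul1r.
by move=> k kj; rewrite /Hentry h (inj_eq (@emb_inj m)) eq_sym (negbTE kj) mul0r.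
Qed.

Lemma rowL (R : nzRingType) m (s : 'S_m.+1) y i :
  s (emb i) = ord_max -> rowS s y i = 0 :> R.
Proof.
by move=> h; rewrite /rowS big1 // => k _; rewrite /Hentry h eq_sym (negbTE (embL k)) mul0r.
Qed.

Lemma alg3 (R : nzRingType) (a b r : R) : a + (b + r) - (a + b) = r.
Proof. by rewrite addrA [_ + r]addrC addrK. Qed.

Lemma Fdiff (R : nzRingType) m (s s' : 'S_m.+1) (y : 'I_m -> 'I_m -> R) u v :
  u != v -> (forall w, w != u -> w != v -> s (emb w) = s' (emb w)) ->
  \sum_i rowS s y i - (rowS s y u + rowS s y v) =
  \sum_i rowS s' y i - (rowS s' y u + rowS s' y v).
Proof.
move=> uv h.
rewrite (bigD1 u) // (bigD1 v) ?(eq_sym v) //= alg3.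
symmetry; rewrite (bigD1 u) // (bigD1 v) ?(eq_sym v) //= alg3; symmetry.
apply: eq_bigr => w /andP[wu wv]; rewrite /rowS; apply: eq_bigr => j _.
by rewrite /Hentry h.
Qed.

Lemma swap m (s : 'S_m.+1) u v : derangement s -> s u != v -> s v != u -> u != v ->
  let s' := (s * tperm (s u) (s v))%g in
  [/\ derangement s', s' u = s v, s' v = s u & forall w, w != u -> w != v -> s' w = s w].
Proof.
move=> ds h1 h2 uv s'.
have e1 : s' u = s v by rewrite permM tpermL.
have e2 : s' v = s u by rewrite permM tpermR.
have e3 : forall w, w != u -> w != v -> s' w = s w.
  by move=> w wu wv; rewrite permM tpermD // (inj_eq perm_inj) eq_sym.
split=> //; apply/forallP => w.
have [->|wu] := eqVneq w u; first by rewrite e1.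
have [->|wv] := eqVneq w v; first by rewrite e2.
by rewrite e3 //; apply: (forallP ds).
Qed.

Lemma lemA (R : nzRingType) m (y : 'I_m -> 'I_m -> R) y0
  (HF : forall s : 'S_m.+1, derangement s -> \sum_i rowS s y i = - y0) i j x :
  i != j -> x != j -> i != x -> y i j = y x j.
Proof.
move=> ij xj ix.
have einj := inj_eq (@emb_inj m).
have u4 : uniq [:: @emb m.+1 x; ord_max; @emb m.+1 i; @emb m.+1 j].
  by rewrite /= !inE !einj ![ord_max == _]eq_sym !(negbTE (embL _)) (eq_sym x i) (negbTE ix) (negbTE xj) ij.
have [s [ds hs]] := cyc_exists u4 isT.
have s1 : s (@emb m.+1 x) = ord_max by rewrite hs /= eqxx.
have s2 : s (@emb m.+1 i) = @emb m.+1 j.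
  by rewrite hs /= einj (negbTE ix) (negbTE (embL i)) eqxx.
have [||| ds' e1 e2 e3] := @swap m s (@emb m.+1 i) (@emb m.+1 x) ds.
- by rewrite s2 einj eq_sym.
- by rewrite s1 eq_sym embL.
- by rewrite einj.
set s' := (s * _)%g in ds' e1 e2 e3.
have hw : forall w, w != i -> w != x -> s (@emb m.+1 w) = s' (@emb m.+1 w).
  by move=> w wi wx; rewrite e3 // einj.
have := @Fdiff R m s s' y i x ix hw.
rewrite !HF // (rowE y s2) (rowL y s1) (rowL y (etrans e1 s1)) (rowE y (etrans e2 s2)) addr0 add0r.
by move/addrI/oppr_inj.
Qed.

Lemma lemB (R : nzRingType) m (y : 'I_m -> 'I_m -> R) y0
  (HF : forall s : 'S_m.+1, derangement s -> \sum_i rowS s y i = - y0) i j k :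
  i != j -> i != k -> j != k -> y i j = y i k.
Proof.
move=> ij ik jk.
have einj := inj_eq (@emb_inj m).
have u4 : uniq [:: @emb m.+1 i; @emb m.+1 j; ord_max; @emb m.+1 k].
  by rewrite /= !inE !einj ![ord_max == _]eq_sym !(negbTE (embL _)) (negbTE ij) (negbTE ik) (negbTE jk).
have [s [ds hs]] := cyc_exists u4 isT.
have s1 : s (@emb m.+1 i) = @emb m.+1 j by rewrite hs /= eqxx.
have s2 : s ord_max = @emb m.+1 k.
  by rewrite hs /= ![ord_max == _]eq_sym !(negbTE (embL _)) eqxx.
have [||| ds' e1 e2 e3] := @swap m s (@emb m.+1 i) ord_max ds.
- by rewrite s1 embL.
- by rewrite s2 einj eq_sym.
- by rewrite embL.
set s' := (s * _)%g in ds' e1 e2 e3.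
have hw : forall w, w != i -> w != j -> s (@emb m.+1 w) = s' (@emb m.+1 w).
  by move=> w wi wj; rewrite e3 // ?einj ?embL.
have hj : s (@emb m.+1 j) = s' (@emb m.+1 j) by rewrite e3 // ?einj ?embL // eq_sym.
have rj : rowS s' y j = rowS s y j by apply: eq_bigr => l _; rewrite /Hentry hj.
have := @Fdiff R m s s' y i j ij hw.
rewrite !HF // (rowE y s1) (rowE y (etrans e1 s2)) rj.
by move/addrI/oppr_inj/addIr.
Qed.

Lemma lem2 (R : nzRingType) (y : 'I_2 -> 'I_2 -> R) y0
  (HF : forall s : 'S_3, derangement s -> \sum_i rowS s y i = - y0) i j :
  i != j -> y i j = - y0.
Proof.
move=> ij.
have einj := inj_eq (@emb_inj 2).
have u3 : uniq [:: @emb 3 i; @emb 3 j; ord_max].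
  by rewrite /= !inE !einj !(negbTE (embL _)) (negbTE ij).
have [s [ds hs]] := cyc_exists u3 isT.
have s1 : s (@emb 3 i) = @emb 3 j by rewrite hs /= eqxx.
have s2 : s (@emb 3 j) = ord_max.
  by rewrite hs /= einj eq_sym (negbTE ij) eqxx.
rewrite -(HF s ds) (bigD1 i) //= (bigD1 j) 1?eq_sym //= big_pred0.
  by rewrite (rowE y s1) (rowL y s2) !addr0.
move=> w /=; apply/negbTE; move: i j w ij {s1 s2 hs u3} => [[|[|?]] ?] [[|[|?]] ?] [[|[|?]] ?] //.
Qed.

Lemma Fconst (R : nzRingType) m (y : 'I_m -> 'I_m -> R) c (s : 'S_m.+1) :
  (forall i j, i != j -> y i j = c) -> derangement s ->
  \sum_i rowS s y i = c *+ m.-1.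
Proof.
move=> hc ds.
set x0 := (s^-1)%g ord_max.
have sx0 : s x0 = ord_max by rewrite /x0 permKV.
have nx : x0 != ord_max.
  by apply/eqP => e; move: (forallP ds x0); rewrite sx0 e eqxx.
have x0lt : (x0 < m)%N.
  move: (ltn_ord x0) nx; rewrite ltnS leq_eqVlt => /orP[/eqP e|//].
  by rewrite -val_eqE /= e eqxx.
pose i0 : 'I_m := Ordinal x0lt.
have s0 : s (@emb m.+1 i0) = ord_max by rewrite -sx0; congr (s _); apply: val_inj.
rewrite (bigD1 i0) //= (rowL y s0) add0r.
rewrite (eq_bigr (fun _ => c)); last first.
  move=> w wi0.
  have nw : s (@emb m.+1 w) != ord_max.
    rewrite -s0 (inj_eq perm_inj) (inj_eq (@emb_inj m)) //.
  have wlt : (s (@emb m.+1 w) < m)%N.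
    move: (ltn_ord (s (@emb m.+1 w))) nw; rewrite ltnS leq_eqVlt => /orP[/eqP e|//].
    by rewrite -val_eqE /= e eqxx.
  pose j : 'I_m := Ordinal wlt.
  have sj : s (@emb m.+1 w) = @emb m.+1 j by apply: val_inj.
  rewrite (rowE y sj) hc //; apply/eqP => e.
  by move: (forallP ds (@emb m.+1 w)); rewrite sj e eqxx.
by rewrite sumr_const cardC1 card_ord.
Qed.

Theorem lemma12 (R : realFieldType) (n : nat) (hn : (3 <= n)%N)
    (y : 'I_n.-1 -> 'I_n.-1 -> R) (y0 : R) :
  (forall s : 'S_n, derangement s ->
     \sum_(i : 'I_n.-1) \sum_(j : 'I_n.-1) Hentry R s i j * y i j + y0 = 0) ->
  exists c : R, (forall i j : 'I_n.-1, i != j -> y i j = c) /\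
                y0 = - ((n - 2)%:R * c).
Proof.
case: n hn y => [|m] // hn y H.
have HF : forall s : 'S_m.+1, derangement s -> \sum_i rowS s y i = - y0.
  by move=> s ds; apply/eqP; rewrite -addr_eq0; apply/eqP; exact: H.
case: m hn y H HF => [|[|[|k]]] // hn y H HF.
  exists (- y0); split; first exact: lem2 HF.
  by rewrite /= mul1r opprK.
pose o1 : 'I_k.+3 := @Ordinal k.+3 1 isT.
pose o2 : 'I_k.+3 := @Ordinal k.+3 2 isT.
pose c := y ord0 o1.
have step1 : forall j, j != ord0 -> y ord0 j = c.
  move=> j j0; have [->|j1] := eqVneq j o1; first by [].
  by apply: lemB HF _ _ _ _ _ _; rewrite // eq_sym.
have hc : forall i j, i != j -> y i j = c.
  move=> i j ij.
  have [i0|i0] := eqVneq i ord0; first by rewrite i0 step1 // eq_sym -i0.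
  have [j0|j0] := eqVneq j ord0; last first.
    by rewrite (lemA HF (x := ord0) ij) ?step1 // eq_sym.
  pose k' := if i == o1 then o2 else o1.
  have k'0 : k' != ord0 by rewrite /k'; case: ifP.
  have ik' : i != k' by rewrite /k'; case: ifP => [/eqP ->|/negbT] //.
  rewrite j0 (lemB HF (j := ord0) (k := k') i0 ik') ?(eq_sym ord0) //.
  by rewrite (lemA HF (x := ord0) ik') ?step1 // eq_sym.
exists c; split => //.
have u2 : uniq [:: (ord0 : 'I_k.+4); ord_max] by [].
have [s [ds _]] := cyc_exists u2 isT.
by rewrite -[y0]opprK -(HF s ds) (Fconst hc ds) mulr_natl.
Qed.
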